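(* Let $A$ be a finite nonempty subset of $\mathbb{R}^n$ not containing the origin $O$. Let $A^{\mathcal B} = \{\tau(S) : S \subset A,\ S \neq \varnothing\}$ and let $A^{\mathcal W} = \{\tau(S) : S \subset A,\ S \neq \varnothing,\ S \text{ affinely independent}\}$. Then $A^{\mathcal B} = A^{\mathcal W}$.
   Context: For a finite nonempty set $S \subset \mathbb{R}^n$, $\mathcal{C}(S)$ denotes its convex hull and $\tau(S)$ denotes the unique point of $\mathcal{C}(S)$ of minimal Euclidean norm, i.e. $\|\tau(S)\| = \inf_{x \in \mathcal{C}(S)} \|x\|$. *)

(* Defs.v *)
From HB Require Import structures.
From mathcomp Require Import all_boot all_order all_algebra.
From mathcomp Require Import finmap.
From mathcomp Require Import reals.
Set Implicit Arguments. Unset Strict Implicit. Unset Printing Implicit Defensive.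
Import Order.TTheory GRing.Theory Num.Theory.
Local Open Scope ring_scope.
Local Open Scope fset_scope.

Definition enorm (R : realType) (n : nat) (x : 'rV[R]_n) : R :=
  Num.sqrt (\sum_(i < n) x 0 i ^+ 2).

Definition in_conv (R : realType) (n : nat) (S : {fset 'rV[R]_n}) (x : 'rV[R]_n) : Prop :=
  exists w : 'rV[R]_n -> R,
    [/\ (forall s, s \in S -> 0 <= w s),
        \sum_(s <- S) w s = 1 &
        x = \sum_(s <- S) w s *: s].

(* x = tau(S): the point of C(S) of minimal Euclidean norm
   (unique; we state membership in the argmin). *)
Definition is_tau (R : realType) (n : nat) (S : {fset 'rV[R]_n}) (x : 'rV[R]_n) : Prop :=
  in_conv S x /\ (forall y, in_conv S y -> enorm x <= enorm y).

Definition aff_indep (R : realType) (n : nat) (S : {fset 'rV[R]_n}) : Prop :=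
  forall c : 'rV[R]_n -> R,
    \sum_(s <- S) c s = 0 -> \sum_(s <- S) c s *: s = 0 ->
    forall s, s \in S -> c s = 0.

Definition AB (R : realType) (n : nat) (A : {fset 'rV[R]_n}) (x : 'rV[R]_n) : Prop :=
  exists S : {fset 'rV[R]_n}, [/\ S `<=` A, S != fset0 & is_tau S x].

Definition AW (R : realType) (n : nat) (A : {fset 'rV[R]_n}) (x : 'rV[R]_n) : Prop :=
  exists S : {fset 'rV[R]_n}, [/\ S `<=` A, S != fset0, aff_indep S & is_tau S x].

(* Main.v *)
Require Import Defs.
From HB Require Import structures.
From mathcomp Require Import all_boot all_order all_algebra.
From mathcomp Require Import finmap.
From mathcomp Require Import reals.
From Stdlib Require Import Classical.
Import Order.TTheory GRing.Theory Num.Theory.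
Local Open Scope ring_scope.
Local Open Scope fset_scope.

Lemma min_seq (R : realType) (T : eqType) (f : T -> R) (s : seq T) :
  s != [::] -> exists2 a, a \in s & forall b, b \in s -> f a <= f b.
Proof.
elim: s => [//|a s IH] _.
have [->|sn] := eqVneq s [::].
  by exists a; rewrite ?mem_head // => b; rewrite inE => /eqP ->.
have [a' a's ha'] := IH sn.
have [le|lt] := lerP (f a) (f a').
  exists a; first by rewrite mem_head.
  move=> b; rewrite inE => /orP[/eqP->//|bs].
  exact: le_trans le (ha' _ bs).
exists a'; first by rewrite inE a's orbT.
move=> b; rewrite inE => /orP[/eqP->|bs]; first exact: ltW.
exact: ha'.
Qed.

Lemma reduce (R : realType) (n : nat) (T : {fset 'rV[R]_n}) (x : 'rV[R]_n) :
  in_conv T x -> ~ aff_indep T -> exists s1, s1 \in T /\ in_conv (T `\ s1) x.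
Proof.
move=> [w [w0 w1 wx]] nai.
have [c0 [c0s c0v [s0 [s0T cs0]]]] : exists c : 'rV[R]_n -> R,
   [/\ \sum_(s <- T) c s = 0, \sum_(s <- T) c s *: s = 0 &
    exists s0, s0 \in T /\ c s0 != 0].
  apply: NNPP => H; apply: nai => c cs cv s sT.
  apply: NNPP => /eqP cne; apply: H; exists c; split => //.
  by exists s.
pose c := fun s => if 0 < c0 s0 then c0 s else - c0 s.
have cs : \sum_(s <- T) c s = 0.
  rewrite /c; case: (0 < c0 s0) => //; by rewrite sumrN c0s oppr0.
have cv : \sum_(s <- T) c s *: s = 0.
  rewrite /c; case: (0 < c0 s0) => //.
  under eq_bigr do rewrite scaleNr.
  by rewrite sumrN c0v oppr0.
have cpos : 0 < c s0.
  rewrite /c; case: ifP => // /negbT; rewrite -leNgt le_eqVlt (negbTE cs0) /=.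
  by rewrite oppr_gt0.
pose P := [seq s <- (T : seq _) | 0 < c s].
have Pn : P != [::].
  apply/eqP => Pe; have : s0 \in P by rewrite mem_filter cpos s0T.
  by rewrite Pe.
have [s1 s1P hs1] := @min_seq _ _ (fun s => w s / c s) _ Pn.
move: s1P; rewrite mem_filter => /andP[c1 s1T].
pose l := w s1 / c s1.
have l0 : 0 <= l by rewrite /l divr_ge0 // ?w0 // ltW.
pose w' := fun s => w s - l * c s.
have w'1 : w' s1 = 0 by rewrite /w' /l divfK ?subrr // gt_eqF.
exists s1; split => //; exists w'; split.
- move=> s; rewrite in_fsetD1 => /andP[_ sT]; rewrite /w' subr_ge0.
  have [cp|cn] := ltrP 0 (c s).
    have := hs1 s; rewrite mem_filter cp sT => /(_ isT).
    by rewrite -/l ler_pdivlMr.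
  apply: le_trans (w0 _ sT).
  by rewrite mulr_ge0_le0.
- have E : \sum_(s <- T) w' s = (w' s1 + \sum_(s <- T `\ s1) w' s)%R.
    by rewrite (big_fsetD1 _ s1T).
  rewrite w'1 add0r in E; rewrite -E.
  by rewrite /w' sumrB -mulr_sumr cs mulr0 subr0.
- have E : \sum_(s <- T) w' s *: s = (w' s1 *: s1 + \sum_(s <- T `\ s1) w' s *: s)%R.
    by rewrite (big_fsetD1 _ s1T).
  rewrite w'1 scale0r add0r in E; rewrite -E.
  rewrite /w'; under eq_bigr do rewrite scalerBl -scalerA.
  by rewrite sumrB -scaler_sumr cv scaler0 subr0.
Qed.

Lemma carath (R : realType) (n : nat) (x : 'rV[R]_n) k :
  forall T : {fset 'rV[R]_n}, (#|` T| <= k)%N -> in_conv T x ->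
  exists T', [/\ T' `<=` T, aff_indep T' & in_conv T' x].
Proof.
elim: k => [|k IH] T Tk hc.
  exists T; split => //.
  move=> c _ _ s sT; move: Tk; rewrite (cardfsD1 s) sT //.
have [ai|nai] := classic (aff_indep T); first by exists T; split.
have [s1 [s1T hc']] := @reduce _ _ _ _ hc nai.
have : (#|` T `\ s1| <= k)%N by move: Tk; rewrite (cardfsD1 s1) s1T.
move=> /IH /(_ hc') [T' [T'sub ai hc'']].
exists T'; split => //; exact: fsubset_trans T'sub (fsubD1set _ _).
Qed.

Lemma conv_sub (R : realType) (n : nat) (T S : {fset 'rV[R]_n}) y :
  T `<=` S -> in_conv T y -> in_conv S y.
Proof.
move=> TS [w [w0 w1 wy]].
exists (fun s => if s \in T then w s else 0); split.
- by move=> s _; case: ifP => // /w0.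
- rewrite -(big_fset_incl _ TS); last by move=> s _ /negbTE ->.
  by rewrite -w1; apply: eq_big_seq => s ->.
- rewrite -(big_fset_incl _ TS); last by move=> s _ /negbTE ->; rewrite scale0r.
  by rewrite wy; apply: eq_big_seq => s ->.
Qed.

Theorem lemma1 (R : realType) (n : nat) (A : {fset 'rV[R]_n}) :
  A != fset0 -> (0 : 'rV[R]_n) \notin A ->
  forall x : 'rV[R]_n, AB A x <-> AW A x.
Proof.
move=> _ _ x; split; last by move=> [S [SA Sn _ t]]; exists S.
move=> [S [SA Sn [hc hmin]]].
have [T' [T'S ai hc']] := @carath _ _ _ _ _ (leqnn _) hc.
exists T'; split => //.
- exact: fsubset_trans T'S SA.
- apply/eqP => T0; move: hc'; rewrite T0 => -[w [_ w1 _]].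
  by move: w1; rewrite big_seq_fset0 => /eqP; rewrite eq_sym oner_eq0.
- split => // y hy; apply: hmin; exact: conv_sub T'S hy.
Qed.
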